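(* Let $\eta>0$, let $C$ be a cost vector, and let $S=\sum_{ij\in\mathcal E}\Big[\log\sum_{x_i,x_j\in\chi}e^{-\eta C_{ij}(x_i,x_j)}+\sum_{x_i,x_j\in\chi}\frac{\eta}{d^2}C_{ij}(x_i,x_j)\Big]+\sum_{i\in\mathcal V}\Big[\log\sum_{x\in\chi}e^{-\eta C_i(x)}+\sum_{x\in\chi}\frac{\eta}{d}C_i(x)\Big]$ and $\mathcal S_0=\min\big(\|\eta C/d+\exp(-\eta C)\|_1,\,S\big)$. For any $\epsilon>0$, the EMP algorithm (run with parameters $C,\eta,\epsilon$) reaches an iterate satisfying $\|\Gamma_{ij}\mathbb 1-\Gamma_i\|_1<\epsilon$ and $\|\Gamma_{ij}^\top\mathbb 1-\Gamma_j\|_1<\epsilon$ for all $ij\in\mathcal E$ within $\lceil 4\mathcal S_0(\deg(G)+1)/\epsilon^2\rceil$ iterations for EMP-cyclic and within $\lceil 4\mathcal S_0/\epsilon^2\rceil$ iterations for EMP-greedy.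
   Context: Let $G=(\mathcal V,\mathcal E)$ be a graph with $\mathcal V=\{1,\dots,n\}$, every vertex on at least one edge, edges written as ordered pairs $ij$, $\deg(G)$ its maximum degree, and $\chi=\{0,\dots,d-1\}$. A marginal vector $\Gamma$ consists of $\Gamma_i\in\mathbb R^d$ ($i\in\mathcal V$) and $\Gamma_{ij}\in\mathbb R^{d\times d}$ ($ij\in\mathcal E$); a cost vector $C$ has the same shape; $\exp$ is entrywise, $\|\cdot\|_1$ is the sum of absolute values of all entries, $\mathbb 1$ is the all-ones vector. Define the following update maps on positive marginal vectors (all components not mentioned are unchanged): $\mathcal P_{ij\to i}$: $\Gamma_{ij}(x_i,x_j)\leftarrow\Gamma_{ij}(x_i,x_j)\sqrt{\Gamma_i(x_i)/\sum_x\Gamma_{ij}(x_i,x)}$, $\Gamma_i(x_i)\leftarrow\Gamma_i(x_i)\sqrt{\sum_x\Gamma_{ij}(x_i,x)/\Gamma_i(x_i)}$; $\mathcal P_{ij,i}$: divide $\Gamma_i$ and $\Gamma_{ij}$ each by the sum of its entries; $\mathcal P_{ij\to j}$: $\Gamma_{ij}(x_i,x_j)\leftarrow\Gamma_{ij}(x_i,x_j)\sqrt{\Gamma_j(x_j)/\sum_x\Gamma_{ij}(x,x_j)}$, $\Gamma_j(x_j)\leftarrow\Gamma_j(x_j)\sqrt{\sum_x\Gamma_{ij}(x,x_j)/\Gamma_j(x_j)}$; $\mathcal P_{ij,j}$: divide $\Gamma_j$ and $\Gamma_{ij}$ each by the sum of its entries. (These are the Bregman projections w.r.t. $\sum\Gamma(\log\Gamma-1)$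 onto the sets where the row sums of $\Gamma_{ij}$ equal $\Gamma_i$, where $\Gamma_i$ and $\Gamma_{ij}$ sum to one, etc.) EMP starts from $\Gamma^{(1)}$ obtained from $\exp(-\eta C)$ by normalizing each $\Gamma_i$ and each $\Gamma_{ij}$ to sum to $1$. At iteration $k$, if $\max_{ij\in\mathcal E}\max\{\|\Gamma^{(k)}_{ij}\mathbb 1-\Gamma^{(k)}_i\|_1,\|(\Gamma^{(k)}_{ij})^\top\mathbb 1-\Gamma^{(k)}_j\|_1\}<\epsilon$ the algorithm stops and outputs the rounding $x_i=\arg\max_x\Gamma^{(k)}_i(x)$. Otherwise: EMP-cyclic applies, for each edge $ij\in\mathcal E$ in a fixed order, $\mathcal P_{ij,j}\circ\mathcal P_{ij\to j}\circ\mathcal P_{ij,i}\circ\mathcal P_{ij\to i}$, the result being $\Gamma^{(k+1)}$; EMP-greedy picks an edge $ij$ maximizing $\max\{\|\Gamma^{(k)}_{ij}\mathbb 1-\Gamma^{(k)}_i\|_1,\|(\Gamma^{(k)}_{ij})^\top\mathbb 1-\Gamma^{(k)}_j\|_1\}$ and sets $\Gamma^{(k+1)}=\mathcal P_{ij,i}\circ\mathcal P_{ij\to i}(\Gamma^{(k)})$ if $\|\Gamma^{(k)}_{ij}\mathbb 1-\Gamma^{(k)}_i\|_1>\|(\Gamma^{(k)}_{ij})^\top\mathbb 1-\Gamma^{(k)}_j\|_1$ and $\Gamma^{(k+1)}=\mathcal P_{ij,j}\circ\mathcal P_{ij\to j}(\Gamma^{(k)})$ otherwise. *)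

(* Defs.v *)
From HB Require Import structures.
From mathcomp Require Import all_boot all_order all_algebra.
From mathcomp Require Import all_classical all_reals all_analysis.
Set Implicit Arguments. Unset Strict Implicit. Unset Printing Implicit Defensive.
Import Order.TTheory GRing.Theory Num.Theory.
Local Open Scope ring_scope.

Section EMP.
Variables (R : realType) (n d : nat).

(* Edge components are stored for every ordered pair (i,j); only
   those with (i,j) in the edge list are ever read. *)
Record marg := Marg {
  mnode : 'I_n -> 'I_d -> R;
  medge : 'I_n -> 'I_n -> 'I_d -> 'I_d -> R }.

Definition edge := ('I_n * 'I_n)%type.

Definition is_graph (E : seq edge) : Prop :=
  [/\ uniq E,
      (forall e, e \in E -> e.1 != e.2),
      (forall i j, (i, j) \in E -> (j, i) \notin E) &
      (forall v : 'I_n, exists2 e, e \in E & (e.1 == v) || (e.2 == v))].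

Definition vdeg (E : seq edge) (v : 'I_n) : nat :=
  count (fun e : edge => (e.1 == v) || (e.2 == v)) E.

Definition maxdeg (E : seq edge) : nat := \max_(v < n) vdeg E v.

Definition rowsum (M : 'I_d -> 'I_d -> R) (a : 'I_d) : R := \sum_(b < d) M a b.
Definition colsum (M : 'I_d -> 'I_d -> R) (b : 'I_d) : R := \sum_(a < d) M a b.

Definition err_row (G : marg) (e : edge) : R :=
  \sum_(a < d) `| rowsum (medge G e.1 e.2) a - mnode G e.1 a |.
Definition err_col (G : marg) (e : edge) : R :=
  \sum_(b < d) `| colsum (medge G e.1 e.2) b - mnode G e.2 b |.
Definition err (G : marg) (e : edge) : R := Num.max (err_row G e) (err_col G e).

Definition converged (E : seq edge) (eps : R) (G : marg) : Prop :=
  forall e, e \in E -> err_row G e < eps /\ err_col G e < eps.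

Definition upd_node (G : marg) (i : 'I_n) (f : 'I_d -> R) : marg :=
  Marg (fun k => if k == i then f else mnode G k) (medge G).
Definition upd_edge (G : marg) (i j : 'I_n) (M : 'I_d -> 'I_d -> R) : marg :=
  Marg (mnode G) (fun k l => if (k == i) && (l == j) then M else medge G k l).

Definition normalize1 (f : 'I_d -> R) : 'I_d -> R :=
  fun a => f a / \sum_(x < d) f x.
Definition normalize2 (M : 'I_d -> 'I_d -> R) : 'I_d -> 'I_d -> R :=
  fun a b => M a b / \sum_(x < d) \sum_(y < d) M x y.

Definition P_to_i (e : edge) (G : marg) : marg :=
  let: (i, j) := e in
  let M := medge G i j in let g := mnode G i in
  upd_node (upd_edge G i j
              (fun a b => M a b * Num.sqrt (g a / rowsum M a)))
           i (fun a => g a * Num.sqrt (rowsum M a / g a)).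
Definition P_to_j (e : edge) (G : marg) : marg :=
  let: (i, j) := e in
  let M := medge G i j in let g := mnode G j in
  upd_node (upd_edge G i j
              (fun a b => M a b * Num.sqrt (g b / colsum M b)))
           j (fun b => g b * Num.sqrt (colsum M b / g b)).
Definition P_norm_i (e : edge) (G : marg) : marg :=
  let: (i, j) := e in
  upd_node (upd_edge G i j (normalize2 (medge G i j))) i (normalize1 (mnode G i)).
Definition P_norm_j (e : edge) (G : marg) : marg :=
  let: (i, j) := e in
  upd_node (upd_edge G i j (normalize2 (medge G i j))) j (normalize1 (mnode G j)).

Definition emp_init (eta : R) (C : marg) : marg :=
  Marg (fun i => normalize1 (fun x => expR (- (eta * mnode C i x))))
       (fun i j => normalize2 (fun a b => expR (- (eta * medge C i j a b)))).

Definition cyclic_step (E : seq edge) (G : marg) : marg :=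
  foldl (fun H e => P_norm_j e (P_to_j e (P_norm_i e (P_to_i e H)))) G E.

(* EMP-cyclic iterates: emp_cyclic E eta C t = Gamma^(t+1) *)
Definition emp_cyclic (E : seq edge) (eta : R) (C : marg) (t : nat) : marg :=
  iter t (cyclic_step E) (emp_init eta C).

Definition greedy_update (e : edge) (G : marg) : marg :=
  if err_row G e > err_col G e then P_norm_i e (P_to_i e G)
  else P_norm_j e (P_to_j e G).

(* Gs is a run of EMP-greedy (Gs t = Gamma^(t+1)), with arbitrary tie-breaking
   among maximizing edges; the update rule is only imposed while the
   algorithm has not stopped. *)
Definition emp_greedy_run (E : seq edge) (eta eps : R) (C : marg)
    (Gs : nat -> marg) : Prop :=
  Gs 0%N = emp_init eta C /\
  forall t, ~ converged E eps (Gs t) ->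
    exists2 e, e \in E /\ (forall e', e' \in E -> err (Gs t) e' <= err (Gs t) e)
             & Gs t.+1 = greedy_update e (Gs t).

Definition S_const (E : seq edge) (eta : R) (C : marg) : R :=
  \sum_(e <- E)
     (ln (\sum_(a < d) \sum_(b < d) expR (- (eta * medge C e.1 e.2 a b)))
      + \sum_(a < d) \sum_(b < d) eta / (d%:R ^+ 2) * medge C e.1 e.2 a b)
  + \sum_(i < n)
     (ln (\sum_(x < d) expR (- (eta * mnode C i x)))
      + \sum_(x < d) eta / d%:R * mnode C i x).

Definition l1_term (E : seq edge) (eta : R) (C : marg) : R :=
  \sum_(i < n) \sum_(x < d) `| eta * mnode C i x / d%:R + expR (- (eta * mnode C i x)) |
  + \sum_(e <- E) \sum_(a < d) \sum_(b < d)
      `| eta * medge C e.1 e.2 a b / d%:R + expR (- (eta * medge C e.1 e.2 a b)) |.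

Definition S0 (E : seq edge) (eta : R) (C : marg) : R :=
  Num.min (l1_term E eta C) (S_const E eta C).

End EMP.

(* Main.v *)
Require Import Defs.
From HB Require Import structures.
From mathcomp Require Import all_boot all_order all_algebra.
From mathcomp Require Import all_classical all_reals all_analysis.
From mathcomp Require Import ring lra.
Import Order.TTheory GRing.Theory Num.Theory.
Local Open Scope ring_scope.
Set Implicit Arguments. Unset Strict Implicit. Unset Printing Implicit Defensive.


Section Aux.
Variable R : realType.

Lemma ln_le_sub1 (y : R) : 0 < y -> ln y <= y - 1.
Proof.
move=> y0; have := @le_ln1Dx R (y - 1); rewrite [1 + _]addrC subrK; apply; lra.
Qed.

Lemma sqrt_divE (x y : R) : 0 <= x -> 0 <= y ->
  Num.sqrt (x / y) = Num.sqrt x / Num.sqrt y.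
Proof. by move=> x0 y0; rewrite sqrtrM // sqrtrV. Qed.

Lemma sq_le_sq (x y : R) : 0 <= y -> x ^+ 2 <= y ^+ 2 -> x <= y.
Proof. move=> y0 h; nra. Qed.

Lemma CS (d : nat) (x y : 'I_d -> R) :
  (\sum_a x a * y a) ^+ 2 <= (\sum_a x a ^+ 2) * (\sum_a y a ^+ 2).
Proof.
have E1 : (\sum_a x a * y a) ^+ 2 = \sum_a \sum_b (x a * y a) * (x b * y b).
  by rewrite expr2 mulr_suml; apply: eq_bigr => a _; rewrite mulr_sumr.
have E2 : (\sum_a x a ^+ 2) * (\sum_a y a ^+ 2) = \sum_a \sum_b x a ^+ 2 * y b ^+ 2.
  by rewrite mulr_suml; apply: eq_bigr => a _; rewrite mulr_sumr.
rewrite E1 E2.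
have E3 : \sum_a \sum_b (x a ^+ 2 * y b ^+ 2 + x b ^+ 2 * y a ^+ 2) =
    2 * \sum_a \sum_b x a ^+ 2 * y b ^+ 2.
  have -> : \sum_a \sum_b (x a ^+ 2 * y b ^+ 2 + x b ^+ 2 * y a ^+ 2) =
     \sum_a \sum_b x a ^+ 2 * y b ^+ 2 + \sum_a \sum_b x b ^+ 2 * y a ^+ 2.
    by rewrite -big_split; apply: eq_bigr => a _; rewrite big_split.
  by rewrite [X in _ + X = _]exchange_big /= mulr2n mulrDl mul1r.
suff : 2 * (\sum_a \sum_b (x a * y a) * (x b * y b)) <=
       \sum_a \sum_b (x a ^+ 2 * y b ^+ 2 + x b ^+ 2 * y a ^+ 2) by rewrite E3; lra.
rewrite mulr_sumr; apply: ler_sum => a _.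
rewrite mulr_sumr; apply: ler_sum => b _.
have := sqr_ge0 (x a * y b - x b * y a); nra.
Qed.

Lemma sum_sqrt_le (d : nat) (x y : 'I_d -> R) :
  (forall a, 0 <= y a) ->
  \sum_a x a * y a <= Num.sqrt (\sum_a x a ^+ 2) * Num.sqrt (\sum_a y a ^+ 2).
Proof.
move=> y0; apply: sq_le_sq; first by rewrite mulr_ge0 // sqrtr_ge0.
rewrite exprMn !sqr_sqrtr; first exact: CS.
  by apply: sumr_ge0 => a _; apply: sqr_ge0.
by apply: sumr_ge0 => a _; apply: sqr_ge0.
Qed.

Section Core.
Variable d : nat.
Variables p q : 'I_d -> R.
Hypotheses (p0 : forall a, 0 < p a) (q0 : forall a, 0 < q a)
  (p1 : \sum_a p a ^+ 2 = 1) (q1 : \sum_a q a ^+ 2 = 1).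
Let s := \sum_a p a * q a.
Let H := \sum_a (q a - p a) ^+ 2.

Lemma core_s_gt0 : 0 < s.
Proof.
case: (pickP (fun _ : 'I_d => true)) => [a _|none]; last first.
  move: p1; rewrite big1 => [/eqP|a]; last by have := none a.
  by rewrite eq_sym oner_eq0.
rewrite /s (bigD1 a) //=; apply: ltr_pwDl; first by rewrite mulr_gt0.
by apply: sumr_ge0 => b _; rewrite mulr_ge0 // ltW.
Qed.

Lemma core_H : H = 2 - 2 * s.
Proof.
rewrite /H /s (eq_bigr (fun a => q a ^+ 2 + p a ^+ 2 - 2 * (p a * q a))); last first.
  by move=> a _; ring.
rewrite big_split /= big_split /= sumrN -mulr_sumr q1 p1; lra.
Qed.

Lemma core_H_ge0 : 0 <= H.
Proof. by apply: sumr_ge0 => a _; apply: sqr_ge0. Qed.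

Lemma core_s_le1 : s <= 1.
Proof. have := core_H_ge0; rewrite core_H; lra. Qed.

Lemma core_dec : H <= - 2 * ln s.
Proof. rewrite core_H; have := @ln_le_sub1 s core_s_gt0; lra. Qed.

Lemma core_err : \sum_a `|q a ^+ 2 - p a ^+ 2| <= 2 * Num.sqrt H.
Proof.
have -> : \sum_a `|q a ^+ 2 - p a ^+ 2| = \sum_a `|q a - p a| * (q a + p a).
  apply: eq_bigr => a _; have hp := p0 a; have hq := q0 a.
  have -> : q a ^+ 2 - p a ^+ 2 = (q a - p a) * (q a + p a) by ring.
  rewrite normrM [`|q a + p a|]ger0_norm //; lra.
apply: le_trans (@sum_sqrt_le d (fun a => `|q a - p a|) (fun a => q a + p a) _) _.
  by move=> a; have := p0 a; have := q0 a; lra.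
have -> : \sum_a `|q a - p a| ^+ 2 = H by apply: eq_bigr => a _; rewrite real_normK ?num_real.
rewrite mulrC ler_wpM2r ?sqrtr_ge0 //.
have -> : 2 = Num.sqrt (2 ^+ 2) :> R by rewrite sqrtr_sqr ger0_norm.
apply: ler_wsqrtr.
have -> : 2 ^+ 2 = \sum_a (2 * q a ^+ 2 + 2 * p a ^+ 2) :> R.
  by rewrite big_split /= -!mulr_sumr q1 p1; lra.
apply: ler_sum => a _; have := sqr_ge0 (q a - p a); nra.
Qed.

Lemma core_mov : \sum_a `|p a * q a / s - p a ^+ 2| <= 2 * Num.sqrt H.
Proof.
have s0 := core_s_gt0; have s1 := core_s_le1.
have h1 : \sum_a `|p a * q a / s - p a ^+ 2| <=
   \sum_a (p a * q a * (s^-1 - 1)) + \sum_a p a * `|q a - p a|.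
  rewrite -big_split /=; apply: ler_sum => a _.
  have -> : p a * q a / s - p a ^+ 2 = p a * q a * (s^-1 - 1) + p a * (q a - p a) by ring.
  apply: le_trans (ler_normD _ _) _; apply: lerD.
    rewrite ger0_norm // mulr_ge0 //; first by rewrite mulr_ge0 // ltW.
    by rewrite subr_ge0 invf_ge1.
  by rewrite normrM ger0_norm // ltW.
apply: le_trans h1 _.
rewrite -mulr_suml -/s mulrBr divff ?gt_eqF // mulr1.
have h2 : \sum_a p a * `|q a - p a| <= Num.sqrt H.
  rewrite (eq_bigr (fun a => `|q a - p a| * p a)); last by move=> a _; rewrite mulrC.
  apply: le_trans (@sum_sqrt_le d (fun a => `|q a - p a|) p _) _.
    by move=> a; apply: ltW.
  rewrite p1 sqrtr1 mulr1.
  have -> : \sum_a `|q a - p a| ^+ 2 = H by apply: eq_bigr => a _; rewrite real_normK ?num_real.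
  by [].
have h3 : 1 - s <= Num.sqrt H.
  have : H = Num.sqrt H ^+ 2 by rewrite sqr_sqrtr // core_H_ge0.
  have := core_H; have := sqrtr_ge0 H; nra.
lra.
Qed.

End Core.
End Aux.


Section Core2.
Variable R : realType.
Variable d : nat.
Hypothesis d0 : (0 < d)%N.

Definition fKL (u y : R) := u * ln (u / y) - u + y.
Definition F1 (g : 'I_d -> R) := \sum_x fKL (d%:R^-1) (g x).
Definition F2 (M : 'I_d -> 'I_d -> R) :=
  \sum_a \sum_b fKL ((d%:R ^+ 2)^-1) (M a b).

Lemma lnMp (x y : R) : 0 < x -> 0 < y -> ln (x * y) = ln x + ln y.
Proof. by move=> x0 y0; rewrite lnM // posrE. Qed.
Lemma lnVp (x : R) : 0 < x -> ln (x^-1) = - ln x.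
Proof. by move=> x0; rewrite lnV // posrE. Qed.

Lemma fKL_ge0 u y : 0 < u -> 0 < y -> 0 <= fKL u y.
Proof.
move=> u0 y0; rewrite /fKL.
have h := @ln_le_sub1 R (y / u) (divr_gt0 y0 u0).
have -> : ln (u / y) = - ln (y / u).
  by rewrite -lnVp ?divr_gt0 // invf_div.
have : u * ln (y / u) <= u * (y / u - 1) by rewrite ler_wpM2l // ltW.
have -> : u * (y / u - 1) = y - u by field; rewrite gt_eqF //.
lra.
Qed.

Lemma fKL_diff u y y' : 0 < u -> 0 < y -> 0 < y' ->
  fKL u y - fKL u y' = u * (ln y' - ln y) + (y - y').
Proof.
move=> u0 y0 y'0; rewrite /fKL !lnMp ?invr_gt0 // !lnVp //; ring.
Qed.

Lemma dR_gt0 : 0 < d%:R :> R. Proof. by rewrite ltr0n. Qed.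

Lemma sum_constd (c : R) : \sum_(a < d) c = d%:R * c.
Proof. by rewrite sumr_const card_ord mulr_natl. Qed.

Lemma rowsum_gt0 (M : 'I_d -> 'I_d -> R) a :
  (forall a b, 0 < M a b) -> 0 < rowsum M a.
Proof.
move=> M0; rewrite /rowsum (bigD1 a) //=; apply: ltr_pwDl => //.
by apply: sumr_ge0 => b _; apply: ltW.
Qed.

Lemma core_row (g : 'I_d -> R) (M : 'I_d -> 'I_d -> R) :
  (forall a, 0 < g a) -> (forall a b, 0 < M a b) ->
  \sum_a g a = 1 -> \sum_a \sum_b M a b = 1 ->
  let g2 := normalize1 (fun a => g a * Num.sqrt (rowsum M a / g a)) in
  let M2 := normalize2 (fun a b => M a b * Num.sqrt (g a / rowsum M a)) in
  let D := F1 g - F1 g2 + (F2 M - F2 M2) in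
  [/\ (forall a, 0 < g2 a), (forall a b, 0 < M2 a b),
      \sum_a g2 a = 1, \sum_a \sum_b M2 a b = 1 &
   [/\ 0 <= D, \sum_a `|rowsum M a - g a| <= 2 * Num.sqrt D,
       \sum_a `|g2 a - g a| <= 2 * Num.sqrt D &
       \sum_a \sum_b `|M2 a b - M a b| <= 2 * Num.sqrt D]].
Proof.
move=> g0 M0 g1 M1 g2 M2 D.
pose p a := Num.sqrt (g a); pose q a := Num.sqrt (rowsum M a).
have r0 : forall a, 0 < rowsum M a by move=> a; apply: rowsum_gt0.
have p0 : forall a, 0 < p a by move=> a; rewrite sqrtr_gt0.
have q0 : forall a, 0 < q a by move=> a; rewrite sqrtr_gt0.
have gp : forall a, g a = p a ^+ 2 by move=> a; rewrite sqr_sqrtr // ltW.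
have rq : forall a, rowsum M a = q a ^+ 2 by move=> a; rewrite sqr_sqrtr // ltW.
have p1 : \sum_a p a ^+ 2 = 1 by rewrite -g1; apply: eq_bigr => a _; rewrite gp.
have q1 : \sum_a q a ^+ 2 = 1 by rewrite -M1; apply: eq_bigr => a _; rewrite -rq.
pose s := \sum_a p a * q a.
have s0 : 0 < s by apply: core_s_gt0.
have g1E : forall a, g a * Num.sqrt (rowsum M a / g a) = p a * q a.
  move=> a; rewrite sqrt_divE ?ltW // -/(p a) -/(q a) gp.
  by field; rewrite gt_eqF //.
have M1E : forall a b, M a b * Num.sqrt (g a / rowsum M a) = M a b * (p a / q a).
  by move=> a b; rewrite sqrt_divE ?ltW.
have sg1 : \sum_a g a * Num.sqrt (rowsum M a / g a) = s.
  by apply: eq_bigr => a _; rewrite g1E.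
have sM1 : \sum_a \sum_b M a b * Num.sqrt (g a / rowsum M a) = s.
  apply: eq_bigr => a _; rewrite (eq_bigr _ (fun b _ => M1E a b)) -mulr_suml.
  rewrite -/(rowsum M a) rq; field; rewrite gt_eqF //.
have g2E : forall a, g2 a = p a * q a / s.
  by move=> a; rewrite /g2 /normalize1 sg1 g1E.
have M2E : forall a b, M2 a b = M a b * (p a / q a) / s.
  by move=> a b; rewrite /M2 /normalize2 sM1 M1E.
have g20 : forall a, 0 < g2 a by move=> a; rewrite g2E !mulr_gt0 ?invr_gt0.
have M20 : forall a b, 0 < M2 a b.
  by move=> a b; rewrite M2E !mulr_gt0 ?invr_gt0.
have g21 : \sum_a g2 a = 1.
  by rewrite (eq_bigr _ (fun a _ => g2E a)) -mulr_suml divff // gt_eqF.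
have M21 : \sum_a \sum_b M2 a b = 1.
  rewrite /M2 /normalize2 sM1.
  rewrite (eq_bigr (fun a => (\sum_b M a b * Num.sqrt (g a / rowsum M a)) / s)).
    by rewrite -mulr_suml sM1 divff // gt_eqF.
  by move=> a _; rewrite mulr_suml.
have u0 : 0 < d%:R^-1 :> R by rewrite invr_gt0 dR_gt0.
have u20 : 0 < (d%:R ^+ 2)^-1 :> R by rewrite invr_gt0 exprn_gt0 // dR_gt0.
have DE : D = - 2 * ln s.
  have hA : F1 g - F1 g2 = \sum_a d%:R^-1 * (ln (q a) - ln (p a) - ln s).
    rewrite /F1 -sumrB.
    rewrite (eq_bigr (fun a => d%:R^-1 * (ln (q a) - ln (p a) - ln s) + (g a - g2 a))).
      by rewrite big_split /= sumrB g1 g21 subrr addr0.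
    move=> a _; rewrite fKL_diff // g2E gp !lnMp ?invr_gt0 ?mulr_gt0 // lnVp //.
    by rewrite ?expr2 ?lnMp //; ring.
  have hB : F2 M - F2 M2 = \sum_a d%:R^-1 * (ln (p a) - ln (q a) - ln s).
    rewrite /F2 -sumrB.
    rewrite (eq_bigr (fun a => d%:R^-1 * (ln (p a) - ln (q a) - ln s)
                               + (\sum_b M a b - \sum_b M2 a b))).
      by rewrite big_split /= sumrB M1 M21 subrr addr0.
    move=> a _; rewrite -!sumrB.
    rewrite (eq_bigr (fun b => (d%:R ^+ 2)^-1 * (ln (p a) - ln (q a) - ln s)
                               + (M a b - M2 a b))).
      rewrite big_split /= sum_constd; congr (_ + _); field.
      by rewrite gt_eqF // dR_gt0.
    move=> b _.
    rewrite fKL_diff // M2E !lnMp ?invr_gt0 ?mulr_gt0 ?invr_gt0 // !lnVp //; ring.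
  rewrite /D hA hB -big_split /=.
  rewrite (eq_bigr (fun a => d%:R^-1 * (- 2 * ln s))); last by move=> a _; ring.
  by rewrite sum_constd mulrA divff ?mul1r // gt_eqF // dR_gt0.
have HD : \sum_a (q a - p a) ^+ 2 <= D by rewrite DE; apply: core_dec.
have H0 : 0 <= \sum_a (q a - p a) ^+ 2 by apply: core_H_ge0.
have sH : 2 * Num.sqrt (\sum_a (q a - p a) ^+ 2) <= 2 * Num.sqrt D.
  by rewrite ler_pM2l // ler_wsqrtr.
split => //; split.
- exact: le_trans H0 HD.
- apply: le_trans sH.
  have <- : \sum_a `|q a ^+ 2 - p a ^+ 2| = \sum_a `|rowsum M a - g a|.
    by apply: eq_bigr => a _; rewrite gp rq.
  by apply: core_err.
- apply: le_trans sH.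
  have <- : \sum_a `|p a * q a / s - p a ^+ 2| = \sum_a `|g2 a - g a|.
    by apply: eq_bigr => a _; rewrite g2E gp.
  by apply: core_mov.
- apply: le_trans sH.
  have -> : \sum_a \sum_b `|M2 a b - M a b| = \sum_a `|q a * p a / (\sum_a q a * p a) - q a ^+ 2|.
    apply: eq_bigr => a _.
    have -> : \sum_a q a * p a = s by apply: eq_bigr => x _; rewrite mulrC.
    rewrite (eq_bigr (fun b => M a b * `|p a / q a / s - 1|)).
      rewrite -mulr_suml -/(rowsum M a) rq -[X in X * _]ger0_norm ?sqr_ge0 // -normrM.
      congr `|_|; field; rewrite !gt_eqF //.
    move=> b _; rewrite M2E -[M a b in RHS]ger0_norm ?ltW // -normrM.
    congr `|_|; field; rewrite !gt_eqF //.
  have -> : \sum_a (q a - p a) ^+ 2 = \sum_a (p a - q a) ^+ 2.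
    by apply: eq_bigr => a _; rewrite -sqrrN opprB.
  by apply: core_mov.
Qed.

End Core2.


Section Core3.
Variable R : realType.
Variable d : nat.
Hypothesis d0 : (0 < d)%N.

Lemma core_col (g : 'I_d -> R) (M : 'I_d -> 'I_d -> R) :
  (forall a, 0 < g a) -> (forall a b, 0 < M a b) ->
  \sum_a g a = 1 -> \sum_a \sum_b M a b = 1 ->
  let g2 := normalize1 (fun b => g b * Num.sqrt (colsum M b / g b)) in
  let M2 := normalize2 (fun a b => M a b * Num.sqrt (g b / colsum M b)) in
  let D := F1 g - F1 g2 + (F2 M - F2 M2) in
  [/\ (forall a, 0 < g2 a), (forall a b, 0 < M2 a b),
      \sum_a g2 a = 1, \sum_a \sum_b M2 a b = 1 &
   [/\ 0 <= D, \sum_b `|colsum M b - g b| <= 2 * Num.sqrt D,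
       \sum_a `|g2 a - g a| <= 2 * Num.sqrt D &
       \sum_a \sum_b `|M2 a b - M a b| <= 2 * Num.sqrt D]].
Proof.
move=> g0 M0 g1 M1 g2 M2 D.
have MT1 : \sum_b \sum_a M a b = 1 by rewrite exchange_big.
have := @core_row R d d0 g (fun b a => M a b) g0 (fun b a => M0 a b) g1 MT1.
cbv zeta.
set MT2 := normalize2 _.
have E : forall a b, M2 a b = MT2 b a.
  move=> a b; rewrite /M2 /MT2 /normalize2; congr (_ / _).
  by rewrite exchange_big.
have EF : F2 M2 = F2 MT2.
  rewrite /F2 exchange_big; apply: eq_bigr => b _; apply: eq_bigr => a _.
  by rewrite E.
have EM : F2 M = F2 (fun b a => M a b) by rewrite /F2 exchange_big.
have -> : D = F1 g - F1 g2 + (F2 (fun b a => M a b) - F2 MT2).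
  by rewrite /D EF EM.
case=> h1 h2 h3 h4 [h5 h6 h7 h8]; split => //.
- by move=> a b; rewrite E.
- by rewrite exchange_big; rewrite -h4; apply: eq_bigr => b _; apply: eq_bigr => a _; rewrite E.
split => //.
apply: le_trans h8 => //=; rewrite exchange_big le_eqVlt; apply/orP; left; apply/eqP.
by apply: eq_bigr => b _; apply: eq_bigr => a _; rewrite E.
Qed.
End Core3.


Section Marg.
Variables (R : realType) (n d : nat).
Hypothesis d0 : (0 < d)%N.
Local Notation marg := (marg R n d).
Local Notation edge := (edge n).

Definition hi (e : edge) (G : marg) := P_norm_i e (P_to_i e G).
Definition hj (e : edge) (G : marg) := P_norm_j e (P_to_j e G).

Definition InvM (G : marg) :=
  [/\ (forall k x, 0 < mnode G k x), (forall k l a b, 0 < medge G k l a b),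
      (forall k, \sum_x mnode G k x = 1) &
      (forall k l, \sum_a \sum_b medge G k l a b = 1)].

Definition Phi (E : seq edge) (G : marg) :=
  \sum_(k < n) F1 (mnode G k) + \sum_(e <- E) F2 (medge G e.1 e.2).

Definition nodemov (G G' : marg) k := \sum_x `|mnode G' k x - mnode G k x|.
Definition edgemov (G G' : marg) k l :=
  \sum_a \sum_b `|medge G' k l a b - medge G k l a b|.

Lemma hi_node i j G k : mnode (hi (i, j) G) k =
  if k == i then normalize1 (fun a => mnode G i a *
       Num.sqrt (rowsum (medge G i j) a / mnode G i a)) else mnode G k.
Proof. by rewrite /hi /P_norm_i /P_to_i /upd_node /upd_edge /= !eqxx /=; case: (k == i). Qed.

Lemma hi_edge i j G k l : medge (hi (i, j) G) k l =
  if (k == i) && (l == j) then normalize2 (fun a b => medge G i j a b *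
       Num.sqrt (mnode G i a / rowsum (medge G i j) a)) else medge G k l.
Proof. by rewrite /hi /P_norm_i /P_to_i /upd_node /upd_edge /= !eqxx /=; case: (_ && _). Qed.

Lemma hj_node i j G k : mnode (hj (i, j) G) k =
  if k == j then normalize1 (fun b => mnode G j b *
       Num.sqrt (colsum (medge G i j) b / mnode G j b)) else mnode G k.
Proof. by rewrite /hj /P_norm_j /P_to_j /upd_node /upd_edge /= !eqxx /=; case: (k == j). Qed.

Lemma hj_edge i j G k l : medge (hj (i, j) G) k l =
  if (k == i) && (l == j) then normalize2 (fun a b => medge G i j a b *
       Num.sqrt (mnode G j b / colsum (medge G i j) b)) else medge G k l.
Proof. by rewrite /hj /P_norm_j /P_to_j /upd_node /upd_edge /= !eqxx /=; case: (_ && _). Qed.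

Lemma Phi_upd E (G G' : marg) i j k g' M' :
  (i, j) \in E -> uniq E ->
  (forall k', mnode G' k' = if k' == k then g' else mnode G k') ->
  (forall k' l', medge G' k' l' = if (k' == i) && (l' == j) then M' else medge G k' l') ->
  Phi E G - Phi E G' = F1 (mnode G k) - F1 g' + (F2 (medge G i j) - F2 M').
Proof.
move=> ijE uE hn he; rewrite /Phi.
rewrite (bigD1 k) //= [X in _ - (X + _)](bigD1 k) //= hn eqxx.
rewrite (bigD1_seq (i, j)) //= [X in _ - (_ + X)](bigD1_seq (i, j)) //= he !eqxx /=.
have -> : \sum_(k' < n | k' != k) F1 (mnode G' k') = \sum_(k' < n | k' != k) F1 (mnode G k').
  by apply: eq_bigr => k' /negbTE kk; rewrite hn kk.
have -> : \sum_(e <- E | e != (i, j)) F2 (medge G' e.1 e.2) =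
          \sum_(e <- E | e != (i, j)) F2 (medge G e.1 e.2).
  apply: eq_bigr => e; case: e => k' l' /= kl; rewrite he.
  case: ifP => // /andP [/eqP ki /eqP lj].
  by move: kl; rewrite ki lj eqxx.
ring.
Qed.

Lemma mov0 (f : 'I_d -> R) : \sum_x `|f x - f x| = 0.
Proof. by rewrite big1 // => x _; rewrite subrr normr0. Qed.

Lemma hi_spec E G i j : (i, j) \in E -> uniq E -> InvM G ->
  [/\ InvM (hi (i, j) G), 0 <= Phi E G - Phi E (hi (i, j) G),
   err_row G (i, j) <= 2 * Num.sqrt (Phi E G - Phi E (hi (i, j) G)),
   (forall k, nodemov G (hi (i, j) G) k <=
       (k == i)%:R * (2 * Num.sqrt (Phi E G - Phi E (hi (i, j) G)))) &
   (forall k l, edgemov G (hi (i, j) G) k l <=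
       ((k == i) && (l == j))%:R * (2 * Num.sqrt (Phi E G - Phi E (hi (i, j) G))))].
Proof.
move=> ijE uE [Gn Ge Gs Gm].
have := @core_row R d d0 (mnode G i) (medge G i j) (Gn i) (Ge i j) (Gs i) (Gm i j).
cbv zeta; set g2 := normalize1 _; set M2 := normalize2 _.
have DE : Phi E G - Phi E (hi (i, j) G) =
    F1 (mnode G i) - F1 g2 + (F2 (medge G i j) - F2 M2).
  by apply: Phi_upd => // [k|k l]; rewrite ?hi_node ?hi_edge.
rewrite DE; case=> h1 h2 h3 h4 [h5 h6 h7 h8]; split => //.
- split.
  + by move=> k x; rewrite hi_node; case: eqP.
  + by move=> k l a b; rewrite hi_edge; case: andP.
  + by move=> k; rewrite hi_node; case: eqP.
  + by move=> k l; rewrite hi_edge; case: andP.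
- move=> k; rewrite /nodemov hi_node; case: eqP => [->|_].
    by rewrite mul1r.
  by rewrite mov0 mul0r.
- move=> k l; rewrite /edgemov hi_edge; case: andP => [[/eqP -> /eqP ->]|_].
    by rewrite mul1r.
  by rewrite mul0r big1 // => a _; rewrite mov0.
Qed.

Lemma hj_spec E G i j : (i, j) \in E -> uniq E -> InvM G ->
  [/\ InvM (hj (i, j) G), 0 <= Phi E G - Phi E (hj (i, j) G),
   err_col G (i, j) <= 2 * Num.sqrt (Phi E G - Phi E (hj (i, j) G)),
   (forall k, nodemov G (hj (i, j) G) k <=
       (k == j)%:R * (2 * Num.sqrt (Phi E G - Phi E (hj (i, j) G)))) &
   (forall k l, edgemov G (hj (i, j) G) k l <=
       ((k == i) && (l == j))%:R * (2 * Num.sqrt (Phi E G - Phi E (hj (i, j) G))))].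
Proof.
move=> ijE uE [Gn Ge Gs Gm].
have := @core_col R d d0 (mnode G j) (medge G i j) (Gn j) (Ge i j) (Gs j) (Gm i j).
cbv zeta; set g2 := normalize1 _; set M2 := normalize2 _.
have DE : Phi E G - Phi E (hj (i, j) G) =
    F1 (mnode G j) - F1 g2 + (F2 (medge G i j) - F2 M2).
  by apply: Phi_upd => // [k|k l]; rewrite ?hj_node ?hj_edge.
rewrite DE; case=> h1 h2 h3 h4 [h5 h6 h7 h8]; split => //.
- split.
  + by move=> k x; rewrite hj_node; case: eqP.
  + by move=> k l a b; rewrite hj_edge; case: andP.
  + by move=> k; rewrite hj_node; case: eqP.
  + by move=> k l; rewrite hj_edge; case: andP.
- move=> k; rewrite /nodemov hj_node; case: eqP => [->|_].
    by rewrite mul1r.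
  by rewrite mov0 mul0r.
- move=> k l; rewrite /edgemov hj_edge; case: andP => [[/eqP -> /eqP ->]|_].
    by rewrite mul1r.
  by rewrite mul0r big1 // => a _; rewrite mov0.
Qed.

End Marg.


Section Sweep.
Variables (R : realType) (n d : nat).
Hypothesis d0 : (0 < d)%N.
Local Notation marg := (marg R n d).
Local Notation edge := (edge n).

Lemma tri3 (x y x' y' : R) : `|x - y| <= `|x' - y'| + `|y' - y| + `|x' - x|.
Proof.
have -> : x - y = (x' - y') + (y' - y) - (x' - x) by ring.
rewrite -[`|x' - x|]normrN; apply: le_trans (ler_normD _ _) _.
by rewrite lerD2r; apply: ler_normD.
Qed.

Lemma err_row_pert (G G' : marg) (e : edge) :
  err_row G e <= err_row G' e + nodemov G G' e.1 + edgemov G G' e.1 e.2.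
Proof.
rewrite /err_row /nodemov /edgemov -!big_split /=; apply: ler_sum => a _.
apply: le_trans (tri3 _ _ (rowsum (medge G' e.1 e.2) a) (mnode G' e.1 a)) _.
by rewrite lerD2l /rowsum -sumrB; apply: ler_norm_sum.
Qed.

Lemma err_col_pert (G G' : marg) (e : edge) :
  err_col G e <= err_col G' e + nodemov G G' e.2 + edgemov G G' e.1 e.2.
Proof.
rewrite /edgemov exchange_big /err_col /nodemov -!big_split /=; apply: ler_sum => b _.
apply: le_trans (tri3 _ _ (colsum (medge G' e.1 e.2) b) (mnode G' e.2 b)) _.
by rewrite lerD2l /colsum -sumrB; apply: ler_norm_sum.
Qed.

Definition hs (p : edge * bool) (G : marg) := if p.2 then hj p.1 G else hi p.1 G.
Definition hnode (p : edge * bool) := if p.2 then p.1.2 else p.1.1.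
Definition halves (E : seq edge) := flatten [seq [:: (e, false); (e, true)] | e <- E].

Lemma cyclic_halves E G : cyclic_step E G = foldl (fun G p => hs p G) G (halves E).
Proof. by rewrite /cyclic_step; elim: E G => //= e E IH G; rewrite IH; case: e. Qed.

Lemma halves_cat E1 E2 : halves (E1 ++ E2) = halves E1 ++ halves E2.
Proof. by rewrite /halves map_cat flatten_cat. Qed.

Lemma mem_halves E p : p \in halves E -> p.1 \in E.
Proof.
elim: E => //= e E IH; rewrite !in_cons; case/orP => [/eqP -> /=|].
  by rewrite eqxx.
case/orP => [/eqP -> /=|pE]; first by rewrite eqxx.
by rewrite IH ?orbT.
Qed.

Lemma hs_spec E G (p : edge * bool) : p.1 \in E -> uniq E -> InvM G ->
  [/\ InvM (hs p G), 0 <= Phi E G - Phi E (hs p G),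
   (forall k, nodemov G (hs p G) k <=
       (k == hnode p)%:R * (2 * Num.sqrt (Phi E G - Phi E (hs p G)))) &
   (forall k l, edgemov G (hs p G) k l <=
       ((k == p.1.1) && (l == p.1.2))%:R * (2 * Num.sqrt (Phi E G - Phi E (hs p G))))].
Proof.
case: p => [[i j] b] /= pE uE IG; rewrite /hs /hnode /=.
by case: b; [case: (hj_spec d0 pE uE IG) | case: (hi_spec d0 pE uE IG)].
Qed.

Lemma comb (A D dl W : R) (w : bool) : 0 <= A -> 0 <= D -> 0 <= dl -> 0 <= W ->
  A ^+ 2 <= 4 * W * D ->
  (A + w%:R * (2 * Num.sqrt dl)) ^+ 2 <= 4 * (w%:R + W) * (dl + D).
Proof.
move=> A0 D0 dl0 W0 h; case: w => /=; last by rewrite mulr0n mul0r addr0 add0r; nra.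
rewrite mulr1n mul1r; set t := Num.sqrt dl.
have t0 : 0 <= t by apply: sqrtr_ge0.
have dlt : dl = t ^+ 2 by rewrite sqr_sqrtr.
have key : A * t <= D + W * t ^+ 2.
  apply: sq_le_sq; first by rewrite addr_ge0 // mulr_ge0 // sqr_ge0.
  have := sqr_ge0 (D - W * t ^+ 2); nra.
rewrite dlt; nra.
Qed.

Lemma sweep_prefix E (Q : marg -> R) (w : edge * bool -> bool) L G :
  uniq E -> (forall p, p \in L -> p.1 \in E) ->
  (forall p G, p \in L -> InvM G ->
     Q G <= Q (hs p G) + (w p)%:R * (2 * Num.sqrt (Phi E G - Phi E (hs p G)))) ->
  InvM G ->
  InvM (foldl (fun G p => hs p G) G L) /\
  exists A, [/\ 0 <= A, Q G <= Q (foldl (fun G p => hs p G) G L) + A,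
     A ^+ 2 <= 4 * (count w L)%:R * (Phi E G - Phi E (foldl (fun G p => hs p G) G L)) &
     0 <= Phi E G - Phi E (foldl (fun G p => hs p G) G L)].
Proof.
move=> uE; elim: L G => [|p L IH] G LE hQ IG /=.
  by split => //; exists 0; rewrite addr0 subrr expr0n /= mulr0.
have pE : p.1 \in E by apply: LE; rewrite mem_head.
case: (hs_spec pE uE IG) => IG1 dl0 _ _.
have LE' : forall q, q \in L -> q.1 \in E.
  by move=> q qL; apply: LE; rewrite in_cons qL orbT.
have hQ' : forall q G', q \in L -> InvM G' ->
     Q G' <= Q (hs q G') + (w q)%:R * (2 * Num.sqrt (Phi E G' - Phi E (hs q G'))).
  by move=> q G' qL; apply: hQ; rewrite in_cons qL orbT.
have [IGe [A [A0 QA AW D0]]] := IH (hs p G) LE' hQ' IG1.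
split => //.
exists (A + (w p)%:R * (2 * Num.sqrt (Phi E G - Phi E (hs p G)))); split.
- by rewrite addr_ge0 // mulr_ge0 // ?ler0n // mulr_ge0 // sqrtr_ge0.
- apply: le_trans (hQ p G (mem_head _ _) IG) _.
  by rewrite addrA lerD2r.
- have -> : Phi E G - Phi E (foldl (fun G p => hs p G) (hs p G) L) =
      (Phi E G - Phi E (hs p G)) + (Phi E (hs p G) - Phi E (foldl (fun G p => hs p G) (hs p G) L)).
    by ring.
  rewrite natrD; apply: comb => //; exact: ler0n.
- have := dl0; lra.
Qed.

Lemma count_halves E (v : 'I_n) : (forall e, e \in E -> e.1 != e.2) ->
  count (fun p => hnode p == v) (halves E) = count (fun e : edge => (e.1 == v) || (e.2 == v)) E.
Proof.
elim: E => //= e E IH h; rewrite IH; last by move=> f fE; apply: h; rewrite in_cons fE orbT.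
rewrite /hnode /= addnA; congr (_ + _).
have := h e (mem_head _ _); clear IH h; case: e => a b /= ab.
case Ha: (a == v); case Hb: (b == v) => //=.
by move/eqP: Ha => Ha; move/eqP: Hb => Hb; rewrite Ha Hb eqxx in ab.
Qed.

End Sweep.


Section Sweep2.
Variables (R : realType) (n d : nat).
Hypothesis d0 : (0 < d)%N.
Local Notation marg := (marg R n d).
Local Notation edge := (edge n).

Lemma fold_mono E L (G : marg) : uniq E -> (forall p, p \in L -> p.1 \in E) -> InvM G ->
  InvM (foldl (fun G p => hs p G) G L) /\
  Phi E (foldl (fun G p => hs p G) G L) <= Phi E G.
Proof.
move=> uE LE IG.
have [h [A [_ _ _ D0]]] := @sweep_prefix R n d d0 E (fun _ => 0) (fun _ => false) L G uE LE
  (fun p G _ _ => ltac:(by rewrite /= mul0r addr0)) IG.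
by split => //; lra.
Qed.

Lemma finish (eps Q0 Qk A dl D1 T : R) (W m : nat) :
  0 <= eps -> eps <= Q0 -> Q0 <= Qk + A -> Qk <= 2 * Num.sqrt dl ->
  0 <= A -> 0 <= dl -> 0 <= D1 -> A ^+ 2 <= 4 * W%:R * D1 -> dl + D1 <= T ->
  (W.+1 <= m)%N -> eps ^+ 2 <= 4 * m%:R * T.
Proof.
move=> e0 h1 h2 h3 A0 dl0 D10 h4 h5 h6.
have := @comb R A D1 dl W%:R true A0 D10 dl0 (ler0n _ _) h4.
rewrite /= mulr1n mul1r => h7.
have hm : (W.+1)%:R <= m%:R :> R by rewrite ler_nat.
rewrite -addn1 natrD /= in hm.
have s0 := sqrtr_ge0 dl.
have h8 : eps <= A + 2 * Num.sqrt dl by lra.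
have h9 : eps ^+ 2 <= (A + 2 * Num.sqrt dl) ^+ 2 by nra.
have W0 : 0 <= W%:R :> R by apply: ler0n.
nra.
Qed.

Lemma pair_neq a b (f : edge) : f != (a, b) -> ((a == f.1) && (b == f.2)) = false.
Proof.
case: f => [c e] /= h; apply/negbTE; apply: contra h => /andP [/eqP -> /eqP ->].
by [].
Qed.

Lemma sweep_dec E (G : marg) eps (e0 : edge) : is_graph E -> InvM G -> e0 \in E -> 0 <= eps ->
  eps <= err_row G e0 \/ eps <= err_col G e0 ->
  eps ^+ 2 <= 4 * (maxdeg E).+1%:R * (Phi E G - Phi E (cyclic_step E G)).
Proof.
move=> [uE neq _ _] IG e0E eps0 herr.
move: e0 e0E herr => [i0 j0] e0E herr.
rewrite cyclic_halves.
have hmax : forall v, (vdeg E v <= maxdeg E)%N.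
  by move=> v; rewrite /maxdeg; exact: (@leq_bigmax _ (fun v => vdeg E v) v).
case/splitPr: e0E uE neq hmax herr => E1 E2 uE neq hmax herr.
set EE := E1 ++ (i0, j0) :: E2.
have nE1 : (i0, j0) \notin E1.
  by move: uE; rewrite cat_uniq => /and3P [_ /= h _]; move: h; rewrite negb_or => /andP [].
have E1E : forall e, e \in E1 -> e \in EE by move=> e eE; rewrite mem_cat eE.
have e0E : (i0, j0) \in EE by rewrite mem_cat mem_head orbT.
have hE1 : forall p, p \in halves E1 -> p.1 \in EE by move=> p /mem_halves; apply: E1E.
have ne0 : forall p, p \in halves E1 -> p.1 != (i0, j0).
  by move=> p /mem_halves pE; apply: contraNneq nE1 => <-.
have neq1 : forall e, e \in E1 -> e.1 != e.2 by move=> e /E1E; apply: neq.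
have hv : forall v, (i0, j0).1 == v \/ (i0, j0).2 == v ->
    ((count (fun e : edge => (e.1 == v) || (e.2 == v)) E1).+1 <= maxdeg EE)%N.
  move=> v hv; apply: leq_trans (hmax v); rewrite /vdeg count_cat /= -addn1 leq_add2l.
  by case: hv => ->; rewrite ?orbT.
have ij0 : i0 != j0 by apply: (neq (i0, j0)).
case: herr => herr.
-
  have hQ : forall p (G' : marg), p \in halves E1 -> InvM G' ->
      err_row G' (i0, j0) <= err_row (hs p G') (i0, j0) +
        (hnode p == i0)%:R * (2 * Num.sqrt (Phi EE G' - Phi EE (hs p G'))).
    move=> p G' pL IG'.
    have pE := hE1 p pL.
    have [_ _ hn he] := hs_spec d0 pE uE IG'.
    apply: le_trans (err_row_pert G' (hs p G') (i0, j0)) _.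
    rewrite -addrA lerD2l /=.
    have := he i0 j0; rewrite pair_neq ?ne0 // mul0r => he'.
    have := hn i0; rewrite eq_sym => hn'.
    lra.
  have [IGk [A [A0 QA AW D0]]] := @sweep_prefix R n d d0 EE (fun G => err_row G (i0, j0))
      (fun p => hnode p == i0) (halves E1) G uE hE1 hQ IG.
  set Gk := foldl _ G (halves E1) in IGk QA AW D0.
  have [IG1 dl0 herrk _ _] := hi_spec d0 e0E uE IGk.
  rewrite (_ : halves (E1 ++ (i0, j0) :: E2) =
      halves E1 ++ (((i0, j0), false) :: ((i0, j0), true) :: halves E2)); last first.
    by rewrite halves_cat.
  rewrite foldl_cat -/Gk /=.
  have hL : forall p, p \in ((i0, j0), true) :: halves E2 -> p.1 \in EE.
    move=> p; rewrite in_cons => /orP [/eqP -> //| /mem_halves].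
    by rewrite mem_cat in_cons => ->; rewrite !orbT.
  have [_ hm] := @fold_mono EE (((i0, j0), true) :: halves E2) (hi (i0, j0) Gk) uE hL IG1.
  apply: (@finish eps (err_row G (i0, j0)) (err_row Gk (i0, j0)) A
     (Phi EE Gk - Phi EE (hi (i0, j0) Gk)) (Phi EE G - Phi EE Gk) _
     (count (fun p => hnode p == i0) (halves E1))) => //.
  + lra.
  + rewrite count_halves //; apply: leq_trans (hv i0 (or_introl (eqxx _))) (leqnSn _).
-
  set L := halves E1 ++ [:: ((i0, j0), false)].
  set w := fun p : edge * bool => (hnode p == j0) || (p.1 == (i0, j0)).
  have hLE : forall p, p \in L -> p.1 \in EE.
    move=> p; rewrite mem_cat => /orP [/hE1 //|]; rewrite in_cons orbF => /eqP -> //.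
  have hQ : forall p (G' : marg), p \in L -> InvM G' ->
      err_col G' (i0, j0) <= err_col (hs p G') (i0, j0) +
        (w p)%:R * (2 * Num.sqrt (Phi EE G' - Phi EE (hs p G'))).
    move=> p G' pL IG'.
    have pE := hLE p pL.
    have [_ dl0 hn he] := hs_spec d0 pE uE IG'.
    apply: le_trans (err_col_pert G' (hs p G') (i0, j0)) _.
    rewrite -addrA lerD2l /=.
    have := he i0 j0; have := hn j0.
    have -> : (i0 == p.1.1) && (j0 == p.1.2) = (p.1 == (i0, j0)).
      by case: (p.1) => a b; rewrite xpair_eqE eq_sym [j0 == b]eq_sym.
    rewrite eq_sym /w.
    have nb : ~~ ((hnode p == j0) && (p.1 == (i0, j0))).
      apply/negP => /andP [/eqP hp /eqP p1].
      move: pL; rewrite mem_cat => /orP [/ne0 /eqP //|].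
      rewrite in_cons orbF => /eqP pe; move: hp; rewrite pe /hnode /= => ij.
      by move: ij0; rewrite ij eqxx.
    set X := 2 * _.
    have X0 : 0 <= X by rewrite mulr_ge0 // sqrtr_ge0.
    move: nb; case: (hnode p == j0); case: (p.1 == (i0, j0)) => //= _ h1 h2;
      rewrite ?mulr1n ?mulr0n ?mul1r ?mul0r in h1 h2 *; lra.
  have [IGk [A [A0 QA AW D0]]] := @sweep_prefix R n d d0 EE (fun G => err_col G (i0, j0))
      w L G uE hLE hQ IG.
  set Gk := foldl _ G L in IGk QA AW D0.
  have [IG1 dl0 herrk _ _] := hj_spec d0 e0E uE IGk.
  rewrite (_ : halves (E1 ++ (i0, j0) :: E2) = L ++ (((i0, j0), true) :: halves E2));
    last by rewrite halves_cat /L -catA.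
  rewrite foldl_cat -/Gk /=.
  have hL : forall p, p \in halves E2 -> p.1 \in EE.
    by move=> p /mem_halves; rewrite mem_cat in_cons => ->; rewrite !orbT.
  have [_ hm] := @fold_mono EE (halves E2) (hj (i0, j0) Gk) uE hL IG1.
  apply: (@finish eps (err_col G (i0, j0)) (err_col Gk (i0, j0)) A
     (Phi EE Gk - Phi EE (hj (i0, j0) Gk)) (Phi EE G - Phi EE Gk) _
     (count w L)) => //.
  + lra.
  + rewrite /L count_cat /= {2}/w /= eqxx orbT addn1 ltnS.
    rewrite (@eq_in_count _ _ (fun p => hnode p == j0)); last first.
      by move=> p pL; rewrite /w (negbTE (ne0 p pL)) orbF.
    rewrite count_halves //; apply: (hv j0 (or_intror (eqxx _))).
Qed.

End Sweep2.


Section Init.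
Variables (R : realType) (n d : nat).
Hypothesis d0 : (0 < d)%N.
Local Notation marg := (marg R n d).
Local Notation edge := (edge n).

Let v : R := d%:R^-1.
Let v0 : 0 < v. Proof. by rewrite /v invr_gt0 ltr0n. Qed.
Let v1 : v <= 1. Proof. by rewrite /v invf_le1 ?ltr0n // ler1n. Qed.
Let dv : d%:R * v = 1. Proof. by rewrite /v divff // pnatr_eq0 -lt0n. Qed.

Lemma Phi_ge0 E (G : marg) : InvM G -> 0 <= Phi E G.
Proof.
case=> Gn Ge _ _; rewrite /Phi addr_ge0 //.
  apply: sumr_ge0 => k _; apply: sumr_ge0 => x _.
  by apply: fKL_ge0; [rewrite invr_gt0 ltr0n | apply: Gn].
apply: sumr_ge0 => e _; apply: sumr_ge0 => a _; apply: sumr_ge0 => b _.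
by apply: fKL_ge0; [rewrite invr_gt0 exprn_gt0 // ltr0n | apply: Ge].
Qed.

Lemma sum_gt0 (f : 'I_d -> R) : (forall x, 0 < f x) -> 0 < \sum_x f x.
Proof.
move=> f0; rewrite (bigD1 (Ordinal d0)) //=; apply: ltr_pwDl => //.
by apply: sumr_ge0 => x _; apply: ltW.
Qed.

Lemma node_F1 (c : 'I_d -> R) eta :
  let e := fun x => expR (- (eta * c x)) in
  F1 (normalize1 e) = ln v + ln (\sum_x e x) + v * \sum_x (eta * c x).
Proof.
move=> e; have e0 : forall x, 0 < e x by move=> x; apply: expR_gt0.
have Z0 := sum_gt0 e0; set Z := \sum_x e x in Z0 *.
rewrite /F1 /fKL /normalize1 -/v.
rewrite (eq_bigr (fun x => v * (ln v + ln Z) + v * (eta * c x) + (e x / Z - v))); last first.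
  move=> x _; rewrite ln_div ?posrE ?divr_gt0 // ln_div ?posrE // /e expRK; ring.
rewrite !big_split /= !sum_constd -mulr_suml -mulr_sumr -/Z divff ?gt_eqF //.
rewrite mulrA dv mulrN dv; ring.
Qed.

Lemma edge_F2 (c : 'I_d -> 'I_d -> R) eta :
  let e := fun a b => expR (- (eta * c a b)) in
  F2 (normalize2 e) = ln ((d%:R ^+ 2)^-1) + ln (\sum_a \sum_b e a b) +
                       (d%:R ^+ 2)^-1 * \sum_a \sum_b (eta * c a b).
Proof.
move=> e; have e0 : forall a b, 0 < e a b by move=> a b; apply: expR_gt0.
have Z0 : 0 < \sum_a \sum_b e a b by apply: sum_gt0 => a; apply: sum_gt0.
set Z := \sum_a \sum_b e a b in Z0 *.
have w0 : 0 < (d%:R ^+ 2)^-1 :> R by rewrite invr_gt0 exprn_gt0 // ltr0n.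
have dw : d%:R * (d%:R * (d%:R ^+ 2)^-1) = 1 :> R.
  by rewrite mulrA -expr2 divff // expf_neq0 // pnatr_eq0 -lt0n.
rewrite /F2 /fKL /normalize2 -/Z.
set w := (d%:R ^+ 2)^-1 in w0 dw *.
rewrite (eq_bigr (fun a => \sum_b (w * (ln w + ln Z) + w * (eta * c a b)
            + (e a b / Z - w)))); last first.
  move=> a _; apply: eq_bigr => b _.
  rewrite ln_div ?posrE ?divr_gt0 // ln_div ?posrE // /e expRK; ring.
rewrite (eq_bigr (fun a => d%:R * (w * (ln w + ln Z)) + w * \sum_b (eta * c a b)
            + (\sum_b e a b / Z - d%:R * w))); last first.
  by move=> a _; rewrite !big_split /= !sum_constd // -mulr_sumr -mulr_suml mulrN.
rewrite !big_split /= !sum_constd // -mulr_sumr.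
have -> : \sum_(i < d) \sum_(b < d) e i b / Z = 1.
  rewrite -[RHS](@divff _ Z) ?gt_eqF // /Z mulr_suml; apply: eq_bigr => i _.
  by rewrite mulr_suml.
have -> : d%:R * (d%:R * (w * (ln w + ln Z))) = ln w + ln Z.
  have -> : d%:R * (d%:R * (w * (ln w + ln Z))) = (d%:R * (d%:R * w)) * (ln w + ln Z) by ring.
  by rewrite dw mul1r.
have -> : d%:R * - (d%:R * w) = - (d%:R * (d%:R * w)) :> R by ring.
rewrite dw.
ring.
Qed.

Lemma node_bound (c : 'I_d -> R) eta :
  F1 (normalize1 (fun x => expR (- (eta * c x)))) <=
     Num.min (\sum_x `|eta * c x / d%:R + expR (- (eta * c x))|)
             (ln (\sum_x expR (- (eta * c x))) + \sum_x eta / d%:R * c x).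
Proof.
rewrite node_F1 le_min; apply/andP; split.
- have e0 : forall x, 0 < expR (- (eta * c x)) by move=> x; apply: expR_gt0.
  have Z0 := sum_gt0 e0.
  have h := @ln_le_sub1 R (v * \sum_x expR (- (eta * c x))) (mulr_gt0 v0 Z0).
  rewrite lnMp // in h.
  have h2 : v * \sum_x expR (- (eta * c x)) + v * \sum_x (eta * c x) <=
            \sum_x `|eta * c x / d%:R + expR (- (eta * c x))|.
    rewrite !mulr_sumr -big_split /=; apply: ler_sum => x _.
    apply: le_trans (ler_norm _).
    rewrite (_ : eta * c x / d%:R = v * (eta * c x)); last by rewrite /v mulrC.
    have := e0 x; have := v1; nra.
  lra.
- rewrite mulr_sumr; have : ln v <= 0 by apply: ln_le0.
  have -> : \sum_i v * (eta * c i) = \sum_x eta / d%:R * c x.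
    by apply: eq_bigr => x _; rewrite /v; ring.
  lra.
Qed.

Lemma edge_bound (c : 'I_d -> 'I_d -> R) eta :
  F2 (normalize2 (fun a b => expR (- (eta * c a b)))) <=
     Num.min (\sum_a \sum_b `|eta * c a b / d%:R + expR (- (eta * c a b))|)
             (ln (\sum_a \sum_b expR (- (eta * c a b))) +
              \sum_a \sum_b eta / (d%:R ^+ 2) * c a b).
Proof.
rewrite edge_F2 le_min; apply/andP; split.
- have e0 : forall a b, 0 < expR (- (eta * c a b)) by move=> a b; apply: expR_gt0.
  have Z0 : 0 < \sum_a \sum_b expR (- (eta * c a b)) by apply: sum_gt0 => a; apply: sum_gt0.
  have w0 : 0 < (d%:R ^+ 2)^-1 :> R by rewrite invr_gt0 exprn_gt0 // ltr0n.
  have h := @ln_le_sub1 R ((d%:R ^+ 2)^-1 * \sum_a \sum_b expR (- (eta * c a b)))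
      (mulr_gt0 w0 Z0).
  rewrite lnMp // in h.
  have h2 : (d%:R ^+ 2)^-1 * \sum_a \sum_b expR (- (eta * c a b)) +
            (d%:R ^+ 2)^-1 * \sum_a \sum_b (eta * c a b) <=
            \sum_a \sum_b `|eta * c a b / d%:R + expR (- (eta * c a b))|.
    rewrite !mulr_sumr -big_split /=; apply: ler_sum => a _.
    rewrite !mulr_sumr -big_split /=; apply: ler_sum => b _.
    apply: le_trans (ler_norm _).
    rewrite (_ : eta * c a b / d%:R = v * (eta * c a b)); last by rewrite /v mulrC.
    rewrite (_ : (d%:R ^+ 2)^-1 = v ^+ 2); last by rewrite /v exprVn.
    have := e0 a b; have := v1; have := v0.
    have := expR_ge1Dx (- (eta * c a b)).
    set y := eta * c a b; set E := expR (- y) => hE h0 h1 hEp.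
    case: (lerP 0 y) => hy.
      have h3 : 0 <= E * (1 - v ^+ 2) by apply: mulr_ge0; nra.
      have h4 : 0 <= y * (v * (1 - v)) by apply: mulr_ge0 => //; apply: mulr_ge0; lra.
      nra.
    have h3 : 0 <= (E + y) * (1 - v ^+ 2) by apply: mulr_ge0; nra.
    have h4 : 0 <= (- y) * (1 - v) by apply: mulr_ge0; lra.
    nra.
  lra.
- rewrite mulr_sumr; have : ln ((d%:R ^+ 2)^-1) <= 0 :> R.
    by apply: ln_le0; rewrite invf_le1 ?exprn_gt0 ?ltr0n // exprn_ege1 // ler1n.
  have -> : \sum_i (d%:R ^+ 2)^-1 * (\sum_b eta * c i b) =
            \sum_a \sum_b eta / (d%:R ^+ 2) * c a b.
    by apply: eq_bigr => a _; rewrite mulr_sumr; apply: eq_bigr => b _; ring.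
  lra.
Qed.

End Init.


Section Main.
Variables (R : realType) (n d : nat).
Hypothesis d0 : (0 < d)%N.
Local Notation marg := (marg R n d).
Local Notation edge := (edge n).

Lemma Inv_init eta (C : marg) : InvM (emp_init eta C).
Proof.
have e0 : forall t : R, 0 < expR t by move=> t; apply: expR_gt0.
have Z1 : forall k, 0 < \sum_x expR (- (eta * mnode C k x)).
  by move=> k; apply: sum_gt0.
have Z2 : forall k l, 0 < \sum_a \sum_b expR (- (eta * medge C k l a b)).
  by move=> k l; apply: sum_gt0 => // a; apply: sum_gt0.
split => /=.
- by move=> k x; rewrite /normalize1 divr_gt0.
- by move=> k l a b; rewrite /normalize2 divr_gt0.
- by move=> k; rewrite /normalize1 -mulr_suml divff // gt_eqF.
- move=> k l; rewrite /normalize2.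
  rewrite -[RHS](@divff _ (\sum_a \sum_b expR (- (eta * medge C k l a b)))) ?gt_eqF //.
  by rewrite mulr_suml; apply: eq_bigr => a _; rewrite mulr_suml.
Qed.

Lemma Phi_init E eta (C : marg) : Phi E (emp_init eta C) <= S0 E eta C.
Proof.
rewrite /S0 le_min; apply/andP; split.
- rewrite /Phi /l1_term /=; apply: lerD.
    apply: ler_sum => k _; have := node_bound d0 (mnode C k) eta.
    by rewrite le_min => /andP [].
  apply: ler_sum => e _; have := edge_bound d0 (medge C e.1 e.2) eta.
  by rewrite le_min => /andP [].
- rewrite /Phi /S_const /= addrC; apply: lerD.
    apply: ler_sum => e _; have := edge_bound d0 (medge C e.1 e.2) eta.
    by rewrite le_min => /andP [].
  apply: ler_sum => k _; have := node_bound d0 (mnode C k) eta.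
  by rewrite le_min => /andP [].
Qed.

Lemma notconv E eps (G : marg) : ~ converged E eps G ->
  exists e, e \in E /\ (eps <= err_row G e \/ eps <= err_col G e).
Proof.
move=> h; case: (pselect (exists e, e \in E /\ (eps <= err_row G e \/ eps <= err_col G e))) => //.
move=> hn; exfalso; apply: h => e eE; split; rewrite ltNge; apply/negP => he;
  apply: hn; exists e; split => //; [left|right] => //.
Qed.

Lemma sq_bound (eps D : R) : 0 <= eps -> 0 <= D -> eps <= 2 * Num.sqrt D -> eps ^+ 2 <= 4 * D.
Proof.
move=> e0 D0 h; have s0 := sqrtr_ge0 D; have : Num.sqrt D ^+ 2 = D by rewrite sqr_sqrtr.
nra.
Qed.

Lemma count_contra (Phi0 S x delta : R) (f : nat -> R) (N : nat) :
  0 <= Phi0 -> Phi0 <= S -> 0 < delta -> x * delta = S -> x < N%:R ->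
  0 <= f N -> f N <= Phi0 - N%:R * delta -> False.
Proof. move=> h1 h2 h3 h4 h5 h6 h7; nra. Qed.

Lemma ceil_nat (x : R) (t : nat) : t%:R <= x -> (Posz t <= Num.ceil x)%R.
Proof.
move=> h; rewrite -(ler_int R); apply: le_trans h (ceil_ge x).
Qed.

End Main.

Unset Implicit Arguments. Set Strict Implicit.

Theorem theorem2 (R : realType) (n d : nat) (E : seq (edge n))
    (eta eps : R) (C : marg R n d) :
  (0 < d)%N -> is_graph E -> 0 < eta -> 0 < eps ->
  (* EMP-cyclic *)
  (exists t : nat,
     (Posz t <= Num.ceil (4 * S0 E eta C * (maxdeg E).+1%:R / eps ^+ 2))%R
     /\ converged E eps (emp_cyclic E eta C t))
  /\
  (* EMP-greedy, for every admissible tie-breaking *)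
  (forall Gs : nat -> marg R n d, emp_greedy_run E eta eps C Gs ->
     exists t : nat,
       (Posz t <= Num.ceil (4 * S0 E eta C / eps ^+ 2))%R
       /\ converged E eps (Gs t)).
Proof.
move=> d0 gE eta0 eps0.
have [uE _ _ _] := gE.
have I0 := Inv_init d0 eta C.
have P0 := Phi_init d0 E eta C.
have P0ge := Phi_ge0 d0 E I0.
have eps2 : 0 < eps ^+ 2 by rewrite exprn_gt0.
have hEE : forall p, p \in halves E -> p.1 \in E by move=> p /mem_halves.
split.
- set m : R := (maxdeg E).+1%:R.
  have m0 : 0 < m by rewrite ltr0n.
  set delta := eps ^+ 2 / (4 * m).
  have dl0 : 0 < delta by rewrite divr_gt0 // mulr_gt0.
  have iter : forall t, (forall t', (t' < t)%N -> ~ converged E eps (emp_cyclic E eta C t')) ->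
      InvM (emp_cyclic E eta C t) /\
      Phi E (emp_cyclic E eta C t) <= Phi E (emp_init eta C) - t%:R * delta.
    elim=> [|t IH] ht; first by split => //; rewrite mul0r subr0.
    have [It Pt] := IH (fun t' lt => ht t' (ltnW lt)).
    have [e0 [e0E herr]] := notconv (ht t (ltnSn t)).
    rewrite /emp_cyclic iterS -/(emp_cyclic E eta C t).
    have [I1 _] : InvM (cyclic_step E (emp_cyclic E eta C t)) /\ True.
      by rewrite cyclic_halves; have [] := fold_mono d0 uE hEE It.
    split => //.
    have := sweep_dec d0 gE It e0E (ltW eps0) herr; rewrite -/m => h.
    have hd : delta <= Phi E (emp_cyclic E eta C t) - Phi E (cyclic_step E (emp_cyclic E eta C t)).
      by rewrite /delta ler_pdivrMr ?mulr_gt0 // mulrC.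
    rewrite -nat1r mulrDl mul1r; lra.
  set x := 4 * S0 E eta C * m / eps ^+ 2.
  case: (pselect (exists t : nat, t%:R <= x /\ converged E eps (emp_cyclic E eta C t))).
    by move=> [t [ht hc]]; exists t; split => //; apply: ceil_nat.
  move=> hno; exfalso.
  have x0 : 0 <= x by rewrite divr_ge0 ?mulr_ge0 ?(ltW m0) ?(ltW eps2) //; lra.
  set N := (Num.trunc x).+1.
  have hN : forall t', (t' < N)%N -> ~ converged E eps (emp_cyclic E eta C t').
    move=> t' lt hc; apply: hno; exists t'; split => //.
    apply: le_trans (_ : _ <= (Num.trunc x)%:R) _; first by rewrite ler_nat -ltnS.
    by rewrite truncn_le.
  have [IN PN] := iter N hN.
  apply: (@count_contra R (Phi E (emp_init eta C)) (S0 E eta C) x delta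
     (fun t => Phi E (emp_cyclic E eta C t)) N) => //.
  + by rewrite /x /delta; field; rewrite ?gt_eqF ?expf_neq0 ?mulr_gt0.
  + exact: truncnS_gt.
  + exact: Phi_ge0.
- move=> Gs [G0 hrun].
  set delta := eps ^+ 2 / 4.
  have dl0 : 0 < delta by rewrite divr_gt0.
  have iter : forall t, (forall t', (t' < t)%N -> ~ converged E eps (Gs t')) ->
      InvM (Gs t) /\ Phi E (Gs t) <= Phi E (emp_init eta C) - t%:R * delta.
    elim=> [|t IH] ht; first by rewrite G0; split => //; rewrite mul0r subr0.
    have [It Pt] := IH (fun t' lt => ht t' (ltnW lt)).
    have nc := ht t (ltnSn t).
    have [e [eE emax] hGs] := hrun t nc.
    have [e' [e'E herr]] := notconv nc.
    have he' : eps <= err (Gs t) e'.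
      by rewrite /err le_max; case: herr => ->; rewrite ?orbT.
    have he : eps <= err (Gs t) e := le_trans he' (emax e' e'E).
    rewrite hGs /greedy_update.
    move: e eE emax hGs he => [i j] eE _ _ he.
    have key : forall D, 0 <= D -> eps <= 2 * Num.sqrt D -> delta <= D.
      move=> D D0 h; have := sq_bound (ltW eps0) D0 h.
      by rewrite /delta ler_pdivrMr // mulrC.
    rewrite -nat1r mulrDl mul1r.
    case: ifP => hrc.
    + have [I1 D0 herr1 _ _] := hi_spec d0 eE uE It.
      split => //.
      have : eps <= err_row (Gs t) (i, j).
        move: he; rewrite /err le_max => /orP [//|h].
        exact: le_trans h (ltW hrc).
      move=> h; have := key _ D0 (le_trans h herr1); lra.
    + have [I1 D0 herr1 _ _] := hj_spec d0 eE uE It.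
      split => //.
      have : eps <= err_col (Gs t) (i, j).
        move: he; rewrite /err le_max => /orP [h|//].
        by apply: le_trans h _; rewrite leNgt hrc.
      move=> h; have := key _ D0 (le_trans h herr1); lra.
  set x := 4 * S0 E eta C / eps ^+ 2.
  case: (pselect (exists t : nat, t%:R <= x /\ converged E eps (Gs t))).
    by move=> [t [ht hc]]; exists t; split => //; apply: ceil_nat.
  move=> hno; exfalso.
  have x0 : 0 <= x by rewrite divr_ge0 ?mulr_ge0 ?(ltW eps2) //; lra.
  set N := (Num.trunc x).+1.
  have hN : forall t', (t' < N)%N -> ~ converged E eps (Gs t').
    move=> t' lt hc; apply: hno; exists t'; split => //.
    apply: le_trans (_ : _ <= (Num.trunc x)%:R) _; first by rewrite ler_nat -ltnS.
    by rewrite truncn_le.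
  have [IN PN] := iter N hN.
  apply: (@count_contra R (Phi E (emp_init eta C)) (S0 E eta C) x delta
     (fun t => Phi E (Gs t)) N) => //.
  + by rewrite /x /delta; field; rewrite ?gt_eqF ?expf_neq0.
  + exact: truncnS_gt.
  + exact: Phi_ge0.
Qed.
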